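(* Let $\mathcal T$ consist of projective objects and let $f\in\mathcal A(X,Y)$ be an epimorphism in $\mathcal A$. The following are equivalent: (1) $\overline f$ is an epimorphism in $\underline{\mathcal A}$; (2) for every morphism $h:X\to T$ with $T\in\mathcal T$, there is a morphism $\tilde h:X\to h(\ker f)$ that coincides with $h$ on $\ker(f)$. If moreover $\mathcal T$ is covariantly finite, these are also equivalent to: (3) for every (equivalently, for some) $\mathcal T$-preenvelope $\mu^X:X\to T^X$, there is a morphism $\tilde\mu:X\to\mu^X(\ker f)$ that coincides with $\mu^X$ on $\ker(f)$.
   Context: $\mathcal A$ is abelian, $\mathcal T$ a full additive subcategory closed under finite direct sums and direct summands consisting of projective objects; $\underline{\mathcal A}=\mathcal A/\langle\mathcal T\rangle$ is the stable category and $\overline f$ the class of $f$. For a subobject $\kappa:K\hookrightarrow X$ and a morphism $h:X\to T$, $h(K)$ denotes the image of $h\kappa$, with canonical inclusion $j:h(K)\hookrightarrow T$; a morphism $\tilde h:X\to h(K)$ is said to coincide with $h$ on $K$ if $j\tilde h\kappa=h\kappa$. *)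

(* Defs.v *)
From mathcomp Require Import all_boot all_algebra.
Set Implicit Arguments. Unset Strict Implicit. Unset Printing Implicit Defensive.
Import GRing.Theory.
Local Open Scope ring_scope.

Record preadditive := Preadditive {
  obj :> Type;
  mor : obj -> obj -> zmodType;
  idm : forall X, mor X X;
  mcomp : forall X Y Z, mor Y Z -> mor X Y -> mor X Z;
  comp_assoc : forall X Y Z W (h : mor Z W) (g : mor Y Z) (f : mor X Y),
      mcomp h (mcomp g f) = mcomp (mcomp h g) f;
  comp_idl : forall X Y (f : mor X Y), mcomp (idm Y) f = f;
  comp_idr : forall X Y (f : mor X Y), mcomp f (idm X) = f;
  comp_addl : forall X Y Z (g1 g2 : mor Y Z) (f : mor X Y),
      mcomp (g1 + g2) f = mcomp g1 f + mcomp g2 f;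
  comp_addr : forall X Y Z (g : mor Y Z) (f1 f2 : mor X Y),
      mcomp g (f1 + f2) = mcomp g f1 + mcomp g f2
}.
Arguments mor {p}.
Arguments idm {p}.
Arguments mcomp {p X Y Z}.

Section PreDefs.
Variable C : preadditive.

Definition mono (X Y : C) (f : mor X Y) : Prop :=
  forall W (a b : mor W X), mcomp f a = mcomp f b -> a = b.
Definition epi (X Y : C) (f : mor X Y) : Prop :=
  forall W (a b : mor Y W), mcomp a f = mcomp b f -> a = b.

Definition is_kernel (X Y K : C) (f : mor X Y) (k : mor K X) : Prop :=
  mcomp f k = 0 /\
  forall W (g : mor W X), mcomp f g = 0 -> exists! u : mor W K, mcomp k u = g.
Definition is_cokernel (X Y Q : C) (f : mor X Y) (c : mor Y Q) : Prop :=
  mcomp c f = 0 /\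
  forall W (g : mor Y W), mcomp g f = 0 -> exists! u : mor Q W, mcomp u c = g.

Definition is_zero_obj (Z : C) : Prop := idm Z = 0.

Definition is_biproduct (X1 X2 S : C) (i1 : mor X1 S) (i2 : mor X2 S)
    (p1 : mor S X1) (p2 : mor S X2) : Prop :=
  [/\ mcomp p1 i1 = idm X1, mcomp p2 i2 = idm X2,
      mcomp p1 i2 = 0, mcomp p2 i1 = 0 &
      mcomp i1 p1 + mcomp i2 p2 = idm S].

Definition projective (P : C) : Prop :=
  forall (A B : C) (e : mor A B), epi e ->
    forall g : mor P B, exists h : mor P A, mcomp e h = g.
End PreDefs.

Record abelian := Abelian {
  pre :> preadditive;
  zero_exists : exists Z : pre, is_zero_obj Z;
  biprod_exists : forall X1 X2 : pre, exists (S : pre) (i1 : mor X1 S) (i2 : mor X2 S)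
      (p1 : mor S X1) (p2 : mor S X2), is_biproduct i1 i2 p1 p2;
  kerO : forall X Y : pre, mor X Y -> pre;
  kerm : forall (X Y : pre) (f : mor X Y), mor (kerO f) X;
  kerm_spec : forall (X Y : pre) (f : mor X Y), is_kernel f (kerm f);
  cokerO : forall X Y : pre, mor X Y -> pre;
  cokerm : forall (X Y : pre) (f : mor X Y), mor Y (cokerO f);
  cokerm_spec : forall (X Y : pre) (f : mor X Y), is_cokernel f (cokerm f);
  mono_is_kernel : forall (X Y : pre) (f : mor X Y), mono f -> is_kernel (cokerm f) f;
  epi_is_cokernel : forall (X Y : pre) (f : mor X Y), epi f -> is_cokernel (kerm f) f
}.
Arguments kerO {a X Y}.
Arguments kerm {a X Y}.
Arguments cokerO {a X Y}.
Arguments cokerm {a X Y}.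

Section AbDefs.
Variable C : abelian.

Definition imO (X Y : C) (g : mor X Y) : C := kerO (cokerm g).
Definition imm (X Y : C) (g : mor X Y) : mor (imO g) Y := kerm (cokerm g).

Variable Tm : C -> Prop.

(* T : full additive subcategory closed under finite direct sums and direct
   summands, consisting of projective objects. *)
Definition admissible : Prop :=
  [/\ exists Z : C, is_zero_obj Z /\ Tm Z,
      (forall (X1 X2 S : C) (i1 : mor X1 S) (i2 : mor X2 S) (p1 : mor S X1)
         (p2 : mor S X2), is_biproduct i1 i2 p1 p2 -> Tm X1 -> Tm X2 -> Tm S),
      (forall (X T : C) (i : mor X T) (p : mor T X),
         mcomp p i = idm X -> Tm T -> Tm X) &
      (forall T : C, Tm T -> projective T)].

Definition factors_T (A B : C) (u : mor A B) : Prop :=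
  exists (T : C) (a : mor A T) (b : mor T B), Tm T /\ u = mcomp b a.

(* equality of classes in the stable category A / <T> *)
Definition stable_eq (A B : C) (u v : mor A B) : Prop := factors_T (u - v).

Definition stable_epi (X Y : C) (f : mor X Y) : Prop :=
  forall (Z : C) (g1 g2 : mor Y Z),
    stable_eq (mcomp g1 f) (mcomp g2 f) -> stable_eq g1 g2.

(* ht : X -> h(K) coincides with h on the subobject k : K -> X *)
Definition coincides_on (X T K : C) (h : mor X T) (k : mor K X)
    (ht : mor X (imO (mcomp h k))) : Prop :=
  mcomp (imm (mcomp h k)) (mcomp ht k) = mcomp h k.

Definition preenvelope (X TX : C) (mu : mor X TX) : Prop :=
  Tm TX /\ forall (T : C) (h : mor X T), Tm T -> exists u : mor TX T, h = mcomp u mu.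

Definition covariantly_finite : Prop :=
  forall X : C, exists (TX : C) (mu : mor X TX), preenvelope mu.
End AbDefs.
Arguments coincides_on {C X T K} h k ht.

(* Main.v *)
Require Import Defs.
From mathcomp Require Import all_boot all_algebra.
Set Implicit Arguments. Unset Strict Implicit. Unset Printing Implicit Defensive.
Import GRing.Theory.
Local Open Scope ring_scope.

Section H.
Variable C : abelian.

Lemma comp0l (X Y Z : C) (f : mor X Y) : mcomp (0 : mor Y Z) f = 0.
Proof.
have H := comp_addl (0 : mor Y Z) 0 f; rewrite addr0 in H.
by apply: (addrI (mcomp (0 : mor Y Z) f)); rewrite -H addr0.
Qed.

Lemma comp0r (X Y Z : C) (g : mor Y Z) : mcomp g (0 : mor X Y) = 0.
Proof.
have H := comp_addr g (0 : mor X Y) 0; rewrite addr0 in H.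
by apply: (addrI (mcomp g (0 : mor X Y))); rewrite -H addr0.
Qed.

Lemma compNl (X Y Z : C) (g : mor Y Z) (f : mor X Y) : mcomp (- g) f = - mcomp g f.
Proof. by apply/eqP; rewrite -subr_eq0 opprK -comp_addl addNr comp0l. Qed.

Lemma compBl (X Y Z : C) (g1 g2 : mor Y Z) (f : mor X Y) :
  mcomp (g1 - g2) f = mcomp g1 f - mcomp g2 f.
Proof. by rewrite comp_addl compNl. Qed.

Lemma compNr (X Y Z : C) (g : mor Y Z) (f : mor X Y) : mcomp g (- f) = - mcomp g f.
Proof. by apply/eqP; rewrite -subr_eq0 opprK -comp_addr addNr comp0r. Qed.

Lemma compBr (X Y Z : C) (g : mor Y Z) (f1 f2 : mor X Y) :
  mcomp g (f1 - f2) = mcomp g f1 - mcomp g f2.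
Proof. by rewrite comp_addr compNr. Qed.

Lemma ker_mono (X Y K : C) (f : mor X Y) (k : mor K X) : is_kernel f k -> mono k.
Proof.
move=> [fk0 Hk] W a b eab.
have h0 : mcomp f (mcomp k a) = 0 by rewrite comp_assoc fk0 comp0l.
have [u [_ uu]] := Hk W _ h0.
by rewrite -(uu a erefl) (uu b (esym eab)).
Qed.

Lemma coker_epi (X Y Q : C) (f : mor X Y) (c : mor Y Q) : is_cokernel f c -> epi c.
Proof.
move=> [cf0 Hc] W a b eab.
have h0 : mcomp (mcomp a c) f = 0 by rewrite -comp_assoc cf0 comp0r.
have [u [_ uu]] := Hc W _ h0.
by rewrite -(uu a erefl) (uu b (esym eab)).
Qed.

Lemma ker_fact (X Y K W : C) (f : mor X Y) (k : mor K X) (g : mor W X) :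
  is_kernel f k -> mcomp f g = 0 -> exists u, mcomp k u = g.
Proof. by move=> [_ Hk] h; have [u [? _]] := Hk W g h; exists u. Qed.

Lemma coker_fact (X Y Q W : C) (f : mor X Y) (c : mor Y Q) (g : mor Y W) :
  is_cokernel f c -> mcomp g f = 0 -> exists u, mcomp u c = g.
Proof. by move=> [_ Hc] h; have [u [? _]] := Hc W g h; exists u. Qed.

Lemma mono_comp (X Y Z : C) (g : mor Y Z) (f : mor X Y) :
  mono g -> mono f -> mono (mcomp g f).
Proof.
move=> mg mf W a b e; apply: mf; apply: mg.
by rewrite !comp_assoc.
Qed.

Lemma image_fact (A B : C) (g : mor A B) : exists e : mor A (imO g), mcomp (imm g) e = g.
Proof.
apply: (ker_fact (kerm_spec (cokerm g))).
by case: (cokerm_spec g).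
Qed.

Lemma image_epi (A B : C) (g : mor A B) (e : mor A (imO g)) :
  mcomp (imm g) e = g ->
  forall W (x : mor (imO g) W), mcomp x e = 0 -> x = 0.
Proof.
move=> ie W x xe.
set i := imm g in ie *.
have iK : is_kernel (cokerm g) i := kerm_spec (cokerm g).
have mi : mono i := ker_mono iK.
have jK := kerm_spec x.
have [e' ee'] := ker_fact jK xe.
have mm : mono (mcomp i (kerm x)) := mono_comp mi (ker_mono jK).
have mK := mono_is_kernel mm.
have h1 : mcomp (cokerm (mcomp i (kerm x))) g = 0.
  transitivity (mcomp (cokerm (mcomp i (kerm x))) (mcomp i (mcomp (kerm x) e'))).
    by rewrite ee' ie.
  rewrite comp_assoc.
  rewrite comp_assoc -(comp_assoc _ i (kerm x)).
  by case: (cokerm_spec (mcomp i (kerm x))) => -> _; rewrite comp0l.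
have [t tc] := coker_fact (cokerm_spec g) h1.
have h2 : mcomp (cokerm (mcomp i (kerm x))) i = 0.
  by rewrite -tc -comp_assoc; case: iK => -> _; rewrite comp0r.
have [s si] := ker_fact mK h2.
have js : mcomp (kerm x) s = idm _.
  apply: mi; rewrite comp_idr comp_assoc; exact: si.
by rewrite -(comp_idr x) -js comp_assoc; case: jK => -> _; rewrite comp0l.
Qed.


Variable Tm : C -> Prop.

Lemma one_to_two (HT : admissible Tm) (X Y : C) (f : mor X Y) (Hf : epi f) :
  stable_epi Tm f -> forall (T : C) (h : mor X T), Tm T ->
    exists ht : mor X (imO (mcomp h (kerm f))), coincides_on h (kerm f) ht.
Proof.
move=> Hs T h HTT.
set k := kerm f.
set c := cokerm (mcomp h k).
have ch0 : mcomp (mcomp c h) k = 0.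
  by rewrite -comp_assoc; case: (cokerm_spec (mcomp h k)).
have [g gf] := coker_fact (epi_is_cokernel Hf) ch0.
have Hst : stable_eq Tm (mcomp g f) (mcomp 0 f).
  by exists T, h, c; split => //; rewrite comp0l subr0.
have [T' [a [b [HT' gab]]]] := Hs _ _ _ Hst.
case: HT => _ _ _ Hproj.
have [b' cb'] := Hproj T' HT' _ _ _ (coker_epi (cokerm_spec (mcomp h k))) b.
have h0 : mcomp c (h - mcomp (mcomp b' a) f) = 0.
  rewrite compBr comp_assoc -gf !comp_assoc cb' -gab subr0 subrr //.
have [ht iht] := ker_fact (kerm_spec c) h0.
exists ht; rewrite /coincides_on /imm comp_assoc -/c iht compBl -comp_assoc.
by rewrite /k; case: (kerm_spec f) => -> _; rewrite comp0r subr0.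
Qed.

Lemma key2 (X Y : C) (f : mor X Y) (Hf : epi f) (T : C) (h : mor X T) (HTT : Tm T)
  (ht : mor X (imO (mcomp h (kerm f)))) : coincides_on h (kerm f) ht ->
  forall Z (g : mor Y Z) (b : mor T Z), mcomp g f = mcomp b h -> factors_T Tm g.
Proof.
move=> Hco Z g b gfb.
set k := kerm f in ht Hco *.
set i := imm (mcomp h k).
have [e ie] := image_fact (mcomp h k).
have bie : mcomp (mcomp b i) e = 0.
  rewrite -comp_assoc ie comp_assoc -gfb -comp_assoc.
  by rewrite /k; case: (kerm_spec f) => -> _; rewrite comp0r.
have bi0 := image_epi ie bie.
have hk0 : mcomp (h - mcomp i ht) k = 0.
  by rewrite compBl -comp_assoc Hco subrr.
have [w wf] := coker_fact (epi_is_cokernel Hf) hk0.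
exists T, w, b; split => //.
apply: Hf; rewrite -comp_assoc wf compBr comp_assoc bi0 comp0l subr0 //.
Qed.

Lemma two_to_one (X Y : C) (f : mor X Y) (Hf : epi f) :
  (forall (T : C) (h : mor X T), Tm T ->
    exists ht : mor X (imO (mcomp h (kerm f))), coincides_on h (kerm f) ht) ->
  stable_epi Tm f.
Proof.
move=> H2 Z g1 g2 [T [h [b [HTT E]]]].
have [ht Hco] := H2 T h HTT.
apply: (key2 Hf HTT Hco (b:=b)).
by rewrite compBl.
Qed.

Lemma three_to_one (X Y : C) (f : mor X Y) (Hf : epi f) (TX : C) (mu : mor X TX) :
  preenvelope Tm mu ->
  (exists mt : mor X (imO (mcomp mu (kerm f))), coincides_on mu (kerm f) mt) ->
  stable_epi Tm f.
Proof.
move=> [HTX Hpre] [mt Hco] Z g1 g2 [T [h [b [HTT E]]]].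
have [u hu] := Hpre T h HTT.
apply: (key2 Hf HTX Hco (b:=mcomp b u)).
by rewrite compBl E hu comp_assoc.
Qed.

End H.

Theorem proposition4p2 (C : abelian) (Tm : C -> Prop) (HT : admissible Tm)
    (X Y : C) (f : mor X Y) (Hf : epi f) :
  (stable_epi Tm f <->
     (forall (T : C) (h : mor X T), Tm T ->
        exists ht : mor X (imO (mcomp h (kerm f))), coincides_on h (kerm f) ht))
  /\
  (covariantly_finite Tm ->
     (stable_epi Tm f <->
        (forall (TX : C) (mu : mor X TX), preenvelope Tm mu ->
           exists mt : mor X (imO (mcomp mu (kerm f))), coincides_on mu (kerm f) mt))
     /\
     (stable_epi Tm f <->
        (exists (TX : C) (mu : mor X TX), preenvelope Tm mu /\
           exists mt : mor X (imO (mcomp mu (kerm f))), coincides_on mu (kerm f) mt))).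
Proof.
split; first by split; [exact: (one_to_two HT Hf) | exact: two_to_one].
move=> Hcf; split; split.
- by move=> Hs TX mu [HTX _]; exact: (one_to_two HT Hf Hs).
- move=> H3; have [TX [mu Hmu]] := Hcf X.
  exact: (three_to_one Hf Hmu (H3 _ _ Hmu)).
- move=> Hs; have [TX [mu Hmu]] := Hcf X.
  exists TX, mu; split => //; case: Hmu => HTX _; exact: (one_to_two HT Hf Hs).
- by move=> [TX [mu [Hmu H]]]; exact: (three_to_one Hf Hmu H).
Qed.
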